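(* For any simply laced Dynkin diagram with $r$ vertices (not necessarily connected), every multipath in it has total length at most $r(r+1)/2$, and equality can occur only if the diagram is of type $A_r$.
   Context: A simple path in a Dynkin diagram is a sequence of distinct vertices, consecutive ones joined by an edge; its length is the number of its vertices. Given distinct vertices $i_1,\ldots,i_k$ and positive integers $m_1,\ldots,m_k$, a multipath with beginnings $i_1,\ldots,i_k$ and lengths $m_1,\ldots,m_k$ is a sequence of simple paths $(j_{p,1},\ldots,j_{p,m_p})$, $p=1,\ldots,k$, with $j_{p,1}=i_p$, such that for $p<p'$ the vertex $i_p$ does not occur in $(j_{p',1},\ldots,j_{p',m_{p'}})$. Its total length is $m_1+\cdots+m_k$. *)

(* Defs.v *)
From mathcomp Require Import all_boot all_fingroup.
Set Implicit Arguments. Unset Strict Implicit. Unset Printing Implicit Defensive.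

Inductive dtype := TA of nat | TD of nat | TE of nat.

Definition dvalid (t : dtype) : bool :=
  match t with TA n => 0 < n | TD n => 3 < n | TE n => 5 < n <= 8 end.

Definition dsize (t : dtype) : nat :=
  match t with TA n | TD n | TE n => n end.

Definition chain (n u v : nat) : bool :=
  [&& u < n, v < n & (u.+1 == v) || (v.+1 == u)].

Definition sedge (a b u v : nat) : bool :=
  ((u == a) && (v == b)) || ((u == b) && (v == a)).

(** Standard labelling of the connected diagrams, vertices {0,...,n-1}:
    A_n : the chain 0 - ... - (n-1);
    D_n : the chain 0 - ... - (n-2) plus the edge (n-3) - (n-1);
    E_n : the chain 0 - ... - (n-2) plus the edge 2 - (n-1). *)
Definition dedge (t : dtype) (u v : nat) : bool :=
  match t with
  | TA n => chain n u v
  | TD n => chain n.-1 u v || sedge (n - 3) (n - 1) u v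
  | TE n => chain n.-1 u v || sedge 2 (n - 1) u v
  end.

(** Disjoint union of a list of connected diagrams, vertices numbered
    consecutively, component after component. *)
Fixpoint ledge (ts : seq dtype) (u v : nat) : bool :=
  match ts with
  | [::] => false
  | t :: ts' =>
      if (u < dsize t) && (v < dsize t) then dedge t u v
      else if (dsize t <= u) && (dsize t <= v)
           then ledge ts' (u - dsize t) (v - dsize t)
           else false
  end.

Definition is_sl_dynkin (r : nat) (e : rel 'I_r) : Prop :=
  exists ts : seq dtype,
    all dvalid ts /\ sumn (map dsize ts) = r /\
    exists s : {perm 'I_r}, forall x y : 'I_r, e x y = ledge ts (s x) (s y).

Definition is_type_A (r : nat) (e : rel 'I_r) : Prop :=
  exists s : {perm 'I_r}, forall x y : 'I_r, e x y = dedge (TA r) (s x) (s y).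

(** A simple path is stored as (i, rest), standing for the sequence
    i :: rest (so it is nonempty and begins at i). *)
Definition simple_path (T : eqType) (e : rel T) (p : T * seq T) : bool :=
  uniq (p.1 :: p.2) && path e p.1 p.2.

Definition is_multipath (T : eqType) (e : rel T) (ps : seq (T * seq T)) : Prop :=
  all (simple_path e) ps /\ uniq (map fst ps) /\
  forall (x0 : T * seq T) (p q : nat), p < q < size ps ->
    (nth x0 ps p).1 \notin ((nth x0 ps q).1 :: (nth x0 ps q).2).

Definition total_length (T : Type) (ps : seq (T * seq T)) : nat :=
  sumn [seq (size p.2).+1 | p <- ps].

(* Main.v *)
Require Import Defs.
From mathcomp Require Import all_boot all_fingroup.
From mathcomp Require Import zify.
Set Implicit Arguments. Unset Strict Implicit. Unset Printing Implicit Defensive.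

Fixpoint tri (m : nat) : nat := if m is m'.+1 then m'.+1 + tri m' else 0.

Lemma triE m : tri m = m * m.+1 %/ 2.
Proof.
have H : 2 * tri m = m * m.+1.
  elim: m => [//|m IH] /=. rewrite mulnDr IH. nia.
by rewrite -H mulKn.
Qed.

Lemma uniq_size_le r (s : seq 'I_r) : uniq s -> size s <= r.
Proof.
move=> Hu; rewrite -(card_uniqP Hu); apply: leq_trans (max_card _) _.
by rewrite card_ord.
Qed.

Fixpoint mp (T : eqType) (ps : seq (T * seq T)) : Prop :=
  if ps is a :: ps' then (forall q, q \in ps' -> a.1 \notin (q.1 :: q.2)) /\ mp ps'
  else True.

Lemma mp_of (T : eqType) (ps : seq (T * seq T)) :
  (forall x0 p q, p < q < size ps ->
     (nth x0 ps p).1 \notin ((nth x0 ps q).1 :: (nth x0 ps q).2)) -> mp ps.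
Proof.
elim: ps => [//|a ps IH] H /=; split.
  move=> q qin. have := H a 0 (index q ps).+1.
  rewrite /= ltnS index_mem qin nth_index //. by apply.
apply: IH => x0 p q Hpq. exact: (H x0 p.+1 q.+1).
Qed.

Lemma total_cons (T : Type) (a : T * seq T) ps :
  total_length (a :: ps) = (size a.2).+1 + total_length ps.
Proof. by []. Qed.

Lemma key r (e : rel 'I_r) (ps : seq ('I_r * seq 'I_r)) (X : seq 'I_r) :
  uniq X -> all (simple_path e) ps -> mp ps ->
  (forall q x, q \in ps -> x \in X -> x \notin (q.1 :: q.2)) ->
  total_length ps <= tri (r - size X).
Proof.
elim: ps X => [|a ps IH] X HX /= Hs Hmp Hd; first by [].
case/andP: Hs => Ha Hs. case: Hmp => Hmp1 Hmp2.
case/andP: Ha => Hau _.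
have Hlen : size (a.1 :: a.2) + size X <= r.
  rewrite -size_cat; apply: uniq_size_le. rewrite cat_uniq Hau HX andbT /=.
  apply/hasPn => x xX. apply: Hd xX. exact: mem_head.
have Ha1X : a.1 \notin X.
  apply/negP => Hin. move: (Hd a a.1 (mem_head _ _) Hin). by rewrite mem_head.
have IH' := IH (a.1 :: X).
have IH'' : total_length ps <= tri (r - size (a.1 :: X)).
  apply: IH' => //; first by rewrite /= Ha1X HX.
  move=> q x qin; rewrite inE => /orP [/eqP -> | xX]; first exact: Hmp1.
  by apply: Hd; rewrite // inE qin orbT.
rewrite total_cons. move: Hlen IH''; rewrite /=.
case Hm: (r - size X) => [|m]; first lia.
have -> : r - (size X).+1 = m by lia.
move=> /= H1 H2. lia.
Qed.

Lemma typeA0 (e : rel 'I_0) : is_type_A e.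
Proof. exists 1%g. by move=> [m Hm]. Qed.

Lemma leaf_end (T : eqType) (R : rel T) x0 l v :
  uniq (x0 :: l) -> path R x0 l -> v \in x0 :: l ->
  (forall y z, R y v -> R v z -> y = z) -> (v == x0) || (v == last x0 l).
Proof.
move=> Hu Hp; rewrite inE => /orP [->//|vin] Hleaf.
case/splitPr: vin Hu Hp => p1 p2 Hu Hp.
case: p2 Hu Hp => [|z p2] Hu Hp.
  by rewrite last_cat /= eqxx orbT.
move: Hp; rewrite cat_path => /andP [_] /= /and3P [H1 H2 _].
have Hz := Hleaf _ _ H1 H2.
move: Hu; rewrite -cat_cons cat_uniq => /and3P [_ /hasPn H _].
have Hz' : z \in x0 :: p1 by rewrite -Hz mem_last.
have Hzin : z \in [:: v, z & p2] by rewrite !inE eqxx orbT.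
by move: (H z Hzin); rewrite Hz'.
Qed.

Lemma three_two (T : eqType) (a b v1 v2 v3 : T) :
  (v1 == a) || (v1 == b) -> (v2 == a) || (v2 == b) -> (v3 == a) || (v3 == b) ->
  v1 != v2 -> v1 != v3 -> v2 != v3 -> False.
Proof.
by move=> /orP[]/eqP-> /orP[]/eqP-> /orP[]/eqP->; rewrite ?eqxx.
Qed.

Lemma path_const (T : eqType) (R : rel T) (f : T -> bool) :
  (forall x y, R x y -> f x = f y) ->
  forall x l, path R x l -> forall y, y \in x :: l -> f y = f x.
Proof.
move=> Hf x l; elim: l x => [|z l IH] x /=.
  by move=> _ y; rewrite inE => /eqP ->.
case/andP => Hxz Hp y; rewrite inE => /orP [/eqP -> //|yin].
rewrite (Hf _ _ Hxz). exact: IH.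
Qed.

Lemma dvalid_pos t : dvalid t -> 0 < dsize t.
Proof. by case: t => n /=; lia. Qed.

Lemma sumn0 ts : all dvalid ts -> sumn (map dsize ts) = 0 -> ts = [::].
Proof.
case: ts => [//|t ts] /= /andP [Ht _]. have := dvalid_pos Ht. lia.
Qed.

Lemma ledge_comp t ts u v : ledge (t :: ts) u v -> (u < dsize t) = (v < dsize t).
Proof.
rewrite /=. case: ifP => [/andP [-> ->] //|_].
case: ifP => [/andP [H1 H2] _|//].
by rewrite ltnNge H1 ltnNge H2.
Qed.

Lemma no_ham r (t : dtype) (s : {perm 'I_r}) (x0 : 'I_r) (l : seq 'I_r)
  (c1 c2 c3 m1 m2 m3 : nat) :
  uniq (x0 :: l) -> path (fun x y => dedge t (s x) (s y)) x0 l ->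
  (forall y : 'I_r, y \in x0 :: l) ->
  c1 < r -> c2 < r -> c3 < r -> c1 != c2 -> c1 != c3 -> c2 != c3 ->
  (forall u, dedge t u c1 || dedge t c1 u -> u = m1) ->
  (forall u, dedge t u c2 || dedge t c2 u -> u = m2) ->
  (forall u, dedge t u c3 || dedge t c3 u -> u = m3) -> False.
Proof.
move=> Hu Hp Hall h1 h2 h3 d12 d13 d23 L1 L2 L3.
have leaf : forall c m (hc : c < r),
    (forall u, dedge t u c || dedge t c u -> u = m) ->
    ((s^-1)%g (Ordinal hc) == x0) || ((s^-1)%g (Ordinal hc) == last x0 l).
  move=> c m hc L. apply: (leaf_end (R := fun x y => dedge t (s x) (s y))) => //.
  move=> y z /=; rewrite permKV /= => Hy Hz.
  apply: (perm_inj (s := s)); apply: val_inj => /=.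
  by rewrite (L _ (introT orP (or_introl Hy))) (L _ (introT orP (or_intror Hz))).
apply: (three_two (leaf _ _ h1 L1) (leaf _ _ h2 L2) (leaf _ _ h3 L3)).
- apply/eqP => /(congr1 (fun x => val (s x))); rewrite !permKV /=; apply/eqP.
  exact: d12.
- apply/eqP => /(congr1 (fun x => val (s x))); rewrite !permKV /=; apply/eqP.
  exact: d13.
- apply/eqP => /(congr1 (fun x => val (s x))); rewrite !permKV /=; apply/eqP.
  exact: d23.
Qed.

Lemma ham r (e : rel 'I_r) (He : is_sl_dynkin e) (x0 : 'I_r) (l : seq 'I_r) :
  uniq (x0 :: l) -> (size l).+1 = r -> path e x0 l -> is_type_A e.
Proof.
move=> Hu Hsz Hpe.
have Hall : forall y : 'I_r, y \in x0 :: l.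
  move=> y; apply/negPn/negP => Hy.
  have := uniq_size_le (s := y :: x0 :: l); rewrite cons_uniq Hy Hu /= => /(_ isT).
  lia.
case: He => ts [Hv [Hsum [s Hs]]].
have Hpath : path (fun x y => ledge ts (s x) (s y)) x0 l.
  by rewrite -(eq_path Hs).
have r0 : 0 < r by lia.
case: ts Hv Hsum Hs Hpath => [|t ts] Hv Hsum Hs Hpath; first by move: Hsum => /=; lia.
have Hc := path_const (f := fun x => s x < dsize t)
   (fun x y (H : ledge (t :: ts) (s x) (s y)) => ledge_comp H) Hpath.
case/andP: Hv => Hvt Hvs.
have Hts : ts = [::].
  apply: sumn0 => //.
  have r1 : r.-1 < r by lia.
  have := Hc ((s^-1)%g (Ordinal r0)) (Hall _).
  have := Hc ((s^-1)%g (Ordinal r1)) (Hall _).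
  rewrite !permKV /= (dvalid_pos Hvt) => H1 H2.
  move: Hsum => /=; move: H1 H2; lia.
subst ts. move: Hsum => /=; rewrite addn0 => Hsz'.
have Hd : forall x y : 'I_r, ledge [:: t] (s x) (s y) = dedge t (s x) (s y).
  by move=> x y; rewrite /= Hsz' !ltn_ord.
have Hp2 : path (fun x y => dedge t (s x) (s y)) x0 l.
  by rewrite -(eq_path Hd).
clear Hc Hvs. case: t Hvt Hsz' Hs Hd Hp2 Hpath => n /= Hvt Hsz' Hs Hd Hp2 _.
- exists s => x y. by rewrite Hs Hd Hsz'.
- exfalso; subst n.
  apply: (@no_ham r (TD r) s x0 l 0 (r-2) (r-1) 1 (r-3) (r-3)) => //;
  try (by lia); move=> u; rewrite /= /chain /sedge; lia.
- exfalso; subst n.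
  apply: (@no_ham r (TE r) s x0 l 0 (r-2) (r-1) 1 (r-3) 2) => //;
  try (by lia); move=> u; rewrite /= /chain /sedge; lia.
Qed.

Theorem mainTheorem6 (r : nat) (e : rel 'I_r) (He : is_sl_dynkin e)
  (ps : seq ('I_r * seq 'I_r)) (Hps : is_multipath e ps) :
  total_length ps <= r * r.+1 %/ 2 /\
  (total_length ps = r * r.+1 %/ 2 -> is_type_A e).
Proof.
case: Hps => Hs [_ Hnth].
have Hmp := mp_of Hnth.
rewrite -triE.
case: ps Hs Hmp Hnth => [|a ps] Hs Hmp _.
  split; first by [].
  clear Hs Hmp. case: r e He => [|r] e He; first by move=> _; exact: typeA0.
  by [].
have := key (e := e) (ps := ps) (X := [:: a.1]) isT.
case/andP: Hs => Ha Hs. case: Hmp => Hmp1 Hmp2.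
move=> /(_ Hs Hmp2) H.
have {}H : total_length ps <= tri (r - 1).
  apply: H => q x qin; rewrite mem_seq1 => /eqP ->; exact: Hmp1.
case/andP: Ha => Hau Hpa.
have Hlen := uniq_size_le Hau.
rewrite total_cons.
case: r e He a ps Hau Hpa Hlen H Hmp1 Hs Hmp2 => [|r] e He a ps Hau Hpa Hlen H _ _ _.
  by move: Hlen => /=.
rewrite /= subn1 /= in H *. move: Hlen => /= Hlen.
split; first lia.
move=> Heq. have E : (size a.2).+1 = r.+1 by lia.
apply: (ham He Hau) => //.
Qed.
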